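(* Let $(M,g)$ be a 5-dimensional Lorentzian manifold, $p\in M$, and suppose the Weyl tensor at $p$ is of primary alignment type II, with respect to a null frame $(\ell,n,m_3,m_4,m_5)$ in which all positive boost weight Weyl components vanish and the boost weight $0$ components are not all zero. With $w_i=\tfrac12\varepsilon_{ijk}C_{01jk}$, $H_{ij}=\sum_kC_{kikj}$, $R=\sum_iH_{ii}$, $S_{ij}=H_{ij}-\tfrac13R\delta_{ij}$, choose the $m_i$ so that $S=\mathrm{diag}(S_3,S_4,S_5)$ and put $R_i=S_i+\tfrac13 R$. Define $$M=\begin{bmatrix}-\tfrac{R_3}{2}&-\tfrac{w_5}{2}&\tfrac{w_4}{2}\\ \tfrac{w_5}{2}&-\tfrac{R_4}{2}&-\tfrac{w_3}{2}\\ -\tfrac{w_4}{2}&\tfrac{w_3}{2}&-\tfrac{R_5}{2}\end{bmatrix},\qquad \Omega=\begin{bmatrix}\tfrac R2&-w_3&-w_4&-w_5\\ w_3&\tfrac R2-R_3&0&0\\ w_4&0&\tfrac R2-R_4&0\\ w_5&0&0&\tfrac R2-R_5\end{bmatrix}.$$ If $\Omega$ has a single eigenvalue of algebraic multiplicity $4$, then either the Weyl operator $\mathsf C:F^{ab}\mapsto\tfrac12C^{ab}{}_{cd}F^{cd}$ on $\wedge^2T_pM$ is nilpotent, or the characteristic polynomial of $M$ has a pair of non-real complex conjugate roots.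
   Context: A null frame $(\ell,n,m_i)$, $i=3,4,5$, consists of null vectors $\ell,n$ with $g(\ell,n)=1$ and orthonormal spacelike $m_i$ orthogonal to $\ell,n$; frame index $0$ refers to $\ell$, $1$ to $n$, and $i,j,k\in\{3,4,5\}$ to the $m_i$; the boost weight of a component is the number of $0$-indices minus the number of $1$-indices. $\varepsilon_{ijk}$ is the sign of the permutation $(ijk)$ of $(345)$. *)

(* Defs.v *)
From HB Require Import structures.
From mathcomp Require Import all_boot all_order all_algebra.
From mathcomp Require Import reals.
From mathcomp.real_closed Require Export complex.
Set Implicit Arguments. Unset Strict Implicit. Unset Printing Implicit Defensive.
Import Order.TTheory GRing.Theory Num.Theory.
Local Open Scope ring_scope.

(* Null frame indices: ordinal 0 = l, 1 = n, 2,3,4 = m_3, m_4, m_5. *)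
Definition sp (i : 'I_3) : 'I_5 := inord (i + 2).

Section Weyl.
Variable R : realType.

(* components g(e_a, e_b) of the metric in the null frame (its inverse is the same matrix) *)
Definition gN (a b : 'I_5) : R :=
  if ((val a == 0%N) && (val b == 1%N)) || ((val a == 1%N) && (val b == 0%N)) then 1
  else if (a == b) && (2 <= val a)%N then 1 else 0.

(* boost weight of a component C_{abcd}: #0-indices - #1-indices *)
Definition bw (a b c d : 'I_5) : int :=
  (count (fun x : 'I_5 => val x == 0%N) [:: a; b; c; d])%:Z
  - (count (fun x : 'I_5 => val x == 1%N) [:: a; b; c; d])%:Z.

Definition is_weyl (C : 'I_5 -> 'I_5 -> 'I_5 -> 'I_5 -> R) : Prop :=
  [/\ (forall a b c d, C a b c d = - C b a c d),
      (forall a b c d, C a b c d = C c d a b),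
      (forall a b c d, C a b c d + C a c d b + C a d b c = 0)
    & (forall b d, \sum_(a < 5) \sum_(c < 5) gN a c * C a b c d = 0)].

(* epsilon_{ijk}, sign of the permutation (ijk) of (345); spatial indices 0,1,2 <-> 3,4,5 *)
Definition eps (i j k : 'I_3) : R :=
  let t := (val i, val j, val k) in
  if (t == (0,1,2)%N) || (t == (1,2,0)%N) || (t == (2,0,1)%N) then 1
  else if (t == (0,2,1)%N) || (t == (2,1,0)%N) || (t == (1,0,2)%N) then -1
  else 0.

Variable C : 'I_5 -> 'I_5 -> 'I_5 -> 'I_5 -> R.

Definition l0 : 'I_5 := inord 0.
Definition n1 : 'I_5 := inord 1.

Definition wv (i : 'I_3) : R :=
  2^-1 * \sum_(j < 3) \sum_(k < 3) eps i j k * C l0 n1 (sp j) (sp k).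
Definition Hm (i j : 'I_3) : R := \sum_(k < 3) C (sp k) (sp i) (sp k) (sp j).
Definition Rs : R := \sum_(i < 3) Hm i i.
Definition Sm (i j : 'I_3) : R := Hm i j - 3^-1 * Rs * (i == j)%:R.
Definition Ri (i : 'I_3) : R := Sm i i + 3^-1 * Rs.

Definition mx_of_seq (m n : nat) (s : seq (seq R)) : 'M[R]_(m, n) :=
  \matrix_(i < m, j < n) nth 0 (nth [::] s i) j.

Let w3 := wv 0. Let w4 := wv 1. Let w5 := wv 2.
Let R3 := Ri 0. Let R4 := Ri 1. Let R5 := Ri 2.

Definition Mmx : 'M[R]_3 := mx_of_seq 3 3
  [:: [:: - R3 / 2; - w5 / 2; w4 / 2];
      [:: w5 / 2; - R4 / 2; - w3 / 2];
      [:: - w4 / 2; w3 / 2; - R5 / 2]].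

Definition Omega : 'M[R]_4 := mx_of_seq 4 4
  [:: [:: Rs / 2; - w3; - w4; - w5];
      [:: w3; Rs / 2 - R3; 0; 0];
      [:: w4; 0; Rs / 2 - R4; 0];
      [:: w5; 0; 0; Rs / 2 - R5]].

Definition Cup (a b c d : 'I_5) : R :=
  \sum_(a' < 5) \sum_(b' < 5) gN a a' * gN b b' * C a' b' c d.

(* Weyl operator F^{ab} |-> 1/2 C^{ab}_{cd} F^{cd}, bivectors as 5x5 component matrices *)
Definition weyl_op (F : 'M[R]_5) : 'M[R]_5 :=
  \matrix_(a < 5, b < 5) (2^-1 * \sum_(c < 5) \sum_(d < 5) Cup a b c d * F c d).

(* nilpotent as an operator on wedge^2 (antisymmetric component matrices) *)
Definition weyl_op_nilpotent : Prop :=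
  exists k : nat, forall F : 'M[R]_5, F^T = - F -> iter k weyl_op F = 0.

End Weyl.

(* Main.v *)
Require Import Defs.
From HB Require Import structures.
From mathcomp Require Import all_boot all_order all_algebra.
From mathcomp Require Import reals.
From mathcomp.real_closed Require Import complex.
From mathcomp Require Import ring lra.
Import Order.TTheory GRing.Theory Num.Theory.
Local Open Scope ring_scope.


Definition o0 : 'I_5 := @Ordinal 5 0 isT.
Definition o1 : 'I_5 := @Ordinal 5 1 isT.
Definition o2 : 'I_5 := @Ordinal 5 2 isT.
Definition o3 : 'I_5 := @Ordinal 5 3 isT.
Definition o4 : 'I_5 := @Ordinal 5 4 isT.
Definition t0 : 'I_3 := @Ordinal 3 0 isT.
Definition t1 : 'I_3 := @Ordinal 3 1 isT.
Definition t2 : 'I_3 := @Ordinal 3 2 isT.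

Lemma sum5 (R : nmodType) (f : 'I_5 -> R) :
  \sum_(i < 5) f i = f o0 + f o1 + f o2 + f o3 + f o4.
Proof.
rewrite !big_ord_recr big_ord0 /= add0r.
by congr (_ + _ + _ + _ + _); congr f; apply: val_inj.
Qed.

Lemma sum3 (R : nmodType) (f : 'I_3 -> R) :
  \sum_(i < 3) f i = f t0 + f t1 + f t2.
Proof.
rewrite !big_ord_recr big_ord0 /= add0r.
by congr (_ + _ + _); congr f; apply: val_inj.
Qed.

Lemma spE : [/\ sp t0 = o2, sp t1 = o3 & sp t2 = o4].
Proof. by split; apply: val_inj; rewrite /= inordK. Qed.
Lemma l0E : l0 = o0. Proof. by apply: val_inj; rewrite /= inordK. Qed.
Lemma n1E : n1 = o1. Proof. by apply: val_inj; rewrite /= inordK. Qed.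




Definition Af {R : Type} {n} (A : 'M[R]_n.+1) (i j : nat) := A (inord i) (inord j).
Lemma AfE {R : Type} {n} (A : 'M[R]_n.+1) i j : A i j = Af A i j.
Proof. by rewrite /Af !inord_val. Qed.

Lemma det2 (R : comNzRingType) (A : 'M[R]_2) :
  \det A = Af A 0 0 * Af A 1 1 - Af A 0 1 * Af A 1 0.
Proof.
rewrite (expand_det_row A 0) !big_ord_recr big_ord0 /= /cofactor !det_mx11 /=.
rewrite !mxE !AfE /=. ring.
Qed.

Lemma det3 (R : comNzRingType) (A : 'M[R]_3) :
  \det A = Af A 0 0 * (Af A 1 1 * Af A 2 2 - Af A 1 2 * Af A 2 1)
         - Af A 0 1 * (Af A 1 0 * Af A 2 2 - Af A 1 2 * Af A 2 0)
         + Af A 0 2 * (Af A 1 0 * Af A 2 1 - Af A 1 1 * Af A 2 0).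
Proof.
rewrite (expand_det_row A 0) !big_ord_recr big_ord0 /= /cofactor !det2.
rewrite /Af !mxE !AfE /= !inordK //.
rewrite /bump /=; ring.
Qed.


Definition d3 {R : comNzRingType} (A : 'M[R]_4) (a b c : nat) (x y z : nat) :=
  Af A a x * (Af A b y * Af A c z - Af A b z * Af A c y)
  - Af A a y * (Af A b x * Af A c z - Af A b z * Af A c x)
  + Af A a z * (Af A b x * Af A c y - Af A b y * Af A c x).

Lemma det4 (R : comNzRingType) (A : 'M[R]_4) :
  \det A = Af A 0 0 * d3 A 1 2 3 1 2 3 - Af A 0 1 * d3 A 1 2 3 0 2 3
         + Af A 0 2 * d3 A 1 2 3 0 1 3 - Af A 0 3 * d3 A 1 2 3 0 1 2.
Proof.
rewrite (expand_det_row A 0) !big_ord_recr big_ord0 /= /cofactor !det3.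
rewrite /d3 /Af !mxE !AfE /= !inordK //.
rewrite /bump /=; ring.
Qed.

Lemma ord5_cases (a : 'I_5) : a = o0 \/ a = o1 \/ a = o2 \/ a = o3 \/ a = o4.
Proof.
case: a => [[|[|[|[|[|k]]]]] Hk]; last by [].
- by left; apply: val_inj.
- by right; left; apply: val_inj.
- by right; right; left; apply: val_inj.
- by right; right; right; left; apply: val_inj.
- by right; right; right; right; apply: val_inj.
Qed.

Lemma ord3_cases (a : 'I_3) : [\/ a = t0, a = t1 | a = t2].
Proof.
case: a => [[|[|[|k]]] Hk]; last by [].
- by apply: Or31; apply: val_inj.
- by apply: Or32; apply: val_inj.
- by apply: Or33; apply: val_inj.
Qed.

Definition q0 : 'I_4 := @Ordinal 4 0 isT.
Definition q1 : 'I_4 := @Ordinal 4 1 isT.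
Definition q2 : 'I_4 := @Ordinal 4 2 isT.
Definition q3 : 'I_4 := @Ordinal 4 3 isT.
Lemma sum4 (R : nmodType) (f : 'I_4 -> R) :
  \sum_(i < 4) f i = f q0 + f q1 + f q2 + f q3.
Proof.
rewrite !big_ord_recr big_ord0 /= add0r.
by congr (_ + _ + _ + _); congr f; apply: val_inj.
Qed.
Lemma ord4_cases (a : 'I_4) : [\/ a = q0, a = q1, a = q2 | a = q3].
Proof.
case: a => [[|[|[|[|k]]]] Hk]; last by [].
- by apply: Or41; apply: val_inj.
- by apply: Or42; apply: val_inj.
- by apply: Or43; apply: val_inj.
- by apply: Or44; apply: val_inj.
Qed.
Definition pa (k : 'I_4) : 'I_5 := match val k with 0 => o0 | 1 => o3 | 2 => o4 | _ => o2 end.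
Definition pb (k : 'I_4) : 'I_5 := match val k with 0 => o1 | 1 => o4 | 2 => o2 | _ => o3 end.

Definition sw (a : 'I_5) : 'I_5 :=
  if val a == 0%N then o1 else if val a == 1%N then o0 else a.

Section Weyl.
Variable R : realType.
Variable C : 'I_5 -> 'I_5 -> 'I_5 -> 'I_5 -> R.
Hypothesis HW : is_weyl C.
Hypothesis H2 : forall a b c d, (0 < bw a b c d)%R -> C a b c d = 0.

Lemma gN_sum (a : 'I_5) (f : 'I_5 -> R) : \sum_(a' < 5) gN R a a' * f a' = f (sw a).
Proof.
rewrite sum5; case: (ord5_cases a) => [->|[->|[->|[->|->]]]]; rewrite /gN /sw /=; ring.
Qed.

Lemma CupE a b c d : Cup C a b c d = C (sw a) (sw b) c d.
Proof.
rewrite /Cup.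
under eq_bigr => a' _ do (under eq_bigr => b' _ do rewrite -mulrA;
   rewrite -big_distrr /= gN_sum).
by rewrite gN_sum.
Qed.

Lemma anti1 a b c d : C a b c d = - C b a c d.
Proof. by case: HW. Qed.
Lemma pairS a b c d : C a b c d = C c d a b.
Proof. by case: HW. Qed.
Lemma anti2 a b c d : C a b c d = - C a b d c.
Proof. by rewrite pairS anti1 pairS. Qed.
Lemma bian a b c d : C a b c d + C a c d b + C a d b c = 0.
Proof. by case: HW. Qed.
Lemma trace5 b d : C o0 b o1 d + C o1 b o0 d + C o2 b o2 d + C o3 b o3 d + C o4 b o4 d = 0.
Proof.
case: HW => _ _ _ /(_ b d).
have -> : \sum_(a < 5) \sum_(c < 5) gN R a c * C a b c d = \sum_(a < 5) C a b (sw a) d.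
  by apply: eq_bigr => a _; rewrite gN_sum.
by rewrite sum5 /sw /=.
Qed.

Lemma TE (F : 'M[R]_5) a b :
  weyl_op C F a b = 2^-1 * \sum_(c < 5) \sum_(d < 5) C (sw a) (sw b) c d * F c d.
Proof. by rewrite /weyl_op mxE; under eq_bigr => c _ do under eq_bigr => d _ do rewrite CupE. Qed.


Definition Tw := weyl_op C.
Definition fm (F : 'M[R]_5) : 'rV[R]_3 := \row_j F o1 (sp j).
Definition fp (F : 'M[R]_5) : 'rV[R]_3 := \row_j F o0 (sp j).
Definition Bm : 'M[R]_3 := \matrix_(j, i) C o0 (sp i) o1 (sp j).
Definition Bp : 'M[R]_3 := \matrix_(j, i) C o1 (sp i) o0 (sp j).

Definition f0 (F : 'M[R]_5) : 'rV[R]_4 := \row_k F (pa k) (pb k).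
Definition B0 : 'M[R]_4 := \matrix_(k, l) C (sw (pa l)) (sw (pb l)) (pa k) (pb k).

Lemma fm0 F : fm F = 0 -> [/\ F o1 o2 = 0, F o1 o3 = 0 & F o1 o4 = 0].
Proof.
case: spE => s0 s1 s2 H.
have e := fun j => congr1 (fun v : 'rV[R]_3 => v 0 j) H.
move: (e t0) (e t1) (e t2); rewrite !mxE s0 s1 s2; by split.
Qed.
Lemma fp0 F : fp F = 0 -> [/\ F o0 o2 = 0, F o0 o3 = 0 & F o0 o4 = 0].
Proof.
case: spE => s0 s1 s2 H.
have e := fun j => congr1 (fun v : 'rV[R]_3 => v 0 j) H.
move: (e t0) (e t1) (e t2); rewrite !mxE s0 s1 s2; by split.
Qed.
Lemma f00 F : f0 F = 0 -> [/\ F o0 o1 = 0, F o3 o4 = 0, F o4 o2 = 0 & F o2 o3 = 0].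
Proof.
move=> H.
have e := fun j => congr1 (fun v : 'rV[R]_4 => v 0 j) H.
move: (e q0) (e q1) (e q2) (e q3); rewrite !mxE /=; by split.
Qed.

Lemma Fsk {F : 'M[R]_5} (HF : F^T = - F) i j : F i j = - F j i.
Proof. by have := congr1 (fun M : 'M[R]_5 => M j i) HF; rewrite !mxE. Qed.
Lemma Fd {F : 'M[R]_5} (HF : F^T = - F) i : F i i = 0.
Proof.
have := Fsk HF i i; move/eqP; rewrite -subr_eq0 opprK -mulr2n mulrn_eq0 /=.
by move/eqP.
Qed.

Ltac zero_bw :=
  repeat (match goal with |- context [C ?a ?b ?c ?d] =>
            rewrite (H2 a b c d); [|by []] end).

Ltac fsk HF :=
  rewrite ?(Fd HF) ?(Fsk HF o1 o0) ?(Fsk HF o2 o0) ?(Fsk HF o3 o0) ?(Fsk HF o4 o0)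
   ?(Fsk HF o2 o1) ?(Fsk HF o3 o1) ?(Fsk HF o4 o1) ?(Fsk HF o3 o2) ?(Fsk HF o2 o4) ?(Fsk HF o4 o3).

Lemma T_m F (HF : F^T = - F) : fm (Tw F) = fm F *m Bm.
Proof.
case: spE => s0 s1 s2.
apply/rowP => i; rewrite /Tw /fm mxE TE !mxE sum3 !mxE.
case: (ord3_cases i) => ->; rewrite ?s0 ?s1 ?s2 !sum5 /sw /=;
fsk HF; zero_bw;
rewrite ?(anti2 _ _ o2 o1) ?(anti2 _ _ o3 o1) ?(anti2 _ _ o4 o1); field; by [].
Qed.


Lemma T_0 F (HF : F^T = - F) : fm F = 0 -> f0 (Tw F) = f0 F *m B0.
Proof.
case/fm0 => z2 z3 z4.
apply/rowP => i; rewrite /Tw /f0 mxE TE !mxE sum4 !mxE.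
case: (ord4_cases i) => ->; rewrite !sum5 /sw /=;
fsk HF; zero_bw; rewrite ?z2 ?z3 ?z4;
rewrite ?(anti2 _ _ o2 o1) ?(anti2 _ _ o3 o1) ?(anti2 _ _ o4 o1) ?(anti2 _ _ o1 o0)
  ?(anti2 _ _ o3 o2) ?(anti2 _ _ o2 o4) ?(anti2 _ _ o4 o3); field; by [].
Qed.

Lemma T_p F (HF : F^T = - F) : fm F = 0 -> f0 F = 0 -> fp (Tw F) = fp F *m Bp.
Proof.
case: spE => s0 s1 s2.
case/fm0 => z2 z3 z4; case/f00 => y1 y2 y3 y4.
apply/rowP => i; rewrite /Tw /fp mxE TE !mxE sum3 !mxE.
case: (ord3_cases i) => ->; rewrite ?s0 ?s1 ?s2 !sum5 /sw /=;
fsk HF; zero_bw; rewrite ?z2 ?z3 ?z4 ?y1 ?y2 ?y3 ?y4;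
rewrite ?(anti2 _ _ o2 o0) ?(anti2 _ _ o3 o0) ?(anti2 _ _ o4 o0); field; by [].
Qed.

Lemma F_zero F (HF : F^T = - F) : fm F = 0 -> f0 F = 0 -> fp F = 0 -> F = 0.
Proof.
case/fm0 => z2 z3 z4; case/f00 => y1 y2 y3 y4; case/fp0 => x2 x3 x4.
apply/matrixP => a b; rewrite mxE.
case: (ord5_cases a) => [->|[->|[->|[->|->]]]]; case: (ord5_cases b) => [->|[->|[->|[->|->]]]];
fsk HF; by rewrite ?z2 ?z3 ?z4 ?y1 ?y2 ?y3 ?y4 ?x2 ?x3 ?x4 ?oppr0.
Qed.

Lemma T_anti F : (Tw F)^T = - Tw F.
Proof.
apply/matrixP => a b; rewrite [LHS]mxE [RHS]mxE /Tw !TE -mulrN -sumrN.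
congr (_ * _); apply: eq_bigr => c _; rewrite -sumrN; apply: eq_bigr => d _.
by rewrite (anti1 (sw b)) mulNr.
Qed.

Lemma iter_anti k F (HF : F^T = - F) : (iter k Tw F)^T = - iter k Tw F.
Proof. by case: k => [|k] //=; apply: T_anti. Qed.

Lemma iter_m k F (HF : F^T = - F) : fm (iter k Tw F) = fm F *m Bm ^+ k.
Proof.
elim: k => [|k IH]; first by rewrite expr0 mulmx1.
by rewrite /= T_m ?iter_anti // IH exprSr -mulmxA.
Qed.

Lemma iter_0 k G (HG : G^T = - G) : fm G = 0 ->
  fm (iter k Tw G) = 0 /\ f0 (iter k Tw G) = f0 G *m B0 ^+ k.
Proof.
move=> hm; elim: k => [|k [IH1 IH2]]; first by rewrite expr0 mulmx1.
split; first by rewrite iter_m // hm mul0mx.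
by rewrite /= T_0 ?iter_anti // IH2 exprSr -mulmxA.
Qed.

Lemma iter_p k G (HG : G^T = - G) : fm G = 0 -> f0 G = 0 ->
  [/\ fm (iter k Tw G) = 0, f0 (iter k Tw G) = 0 & fp (iter k Tw G) = fp G *m Bp ^+ k].
Proof.
move=> hm h0; elim: k => [|k [IH1 IH2 IH3]]; first by rewrite expr0 mulmx1.
have [a1 a2] := iter_0 k.+1 G HG hm.
split => //; first by rewrite a2 h0 mul0mx.
by rewrite /= T_p ?iter_anti // IH3 exprSr -mulmxA.
Qed.

Lemma weyl_nilp : Bm ^+ 3 = 0 -> B0 ^+ 4 = 0 -> Bp ^+ 3 = 0 -> weyl_op_nilpotent C.
Proof.
move=> hm h0 hp; exists (3 + 4 + 3)%N => F HF.
rewrite !iterD.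
set G1 := iter 3 Tw F.
have a1 : G1^T = - G1 by apply: iter_anti.
have b1 : fm G1 = 0 by rewrite iter_m // hm mulmx0.
set G2 := iter 4 Tw G1.
have a2 : G2^T = - G2 by apply: iter_anti.
have [b2 c2] := iter_0 4 G1 a1 b1.
have c2' : f0 G2 = 0 by rewrite c2 h0 mulmx0.
have [d1 d2 d3] := iter_p 3 G2 a2 b2 c2'.
apply: F_zero; rewrite ?iter_anti //.
by rewrite d3 hp mulmx0.
Qed.

End Weyl.


Section S3.
Variable R : realType.
Variable C : 'I_5 -> 'I_5 -> 'I_5 -> 'I_5 -> R.
Hypothesis HW : is_weyl C.
Hypothesis HS : forall i j : 'I_3, i != j -> Sm C i j = 0.

Lemma sym8 a b c d :
  C a b c d = - C b a c d /\ C a b c d = - C a b d c /\ C a b c d = C b a d c /\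
      C a b c d = C c d a b /\ C a b c d = - C d c a b /\ C a b c d = - C c d b a
    /\ C a b c d = C d c b a.
Proof.
have a1 := @anti1 R C HW; have a2 := @anti2 R C HW; have p := @pairS R C HW.
split; first exact: a1.
split; first exact: a2.
split; first by rewrite a1 a2 opprK.
split; first exact: p.
split; first by rewrite p a1.
split; first by rewrite p a2.
by rewrite p a1 a2 opprK.
Qed.

Lemma spZ : [/\ sp 0 = o2, sp 1 = o3 & sp 2 = o4].
Proof. by split; apply: val_inj; rewrite /= inordK. Qed.

Lemma wvE : [/\ wv C 0 = C o0 o1 o3 o4, wv C 1 = C o0 o1 o4 o2 & wv C 2 = C o0 o1 o2 o3].
Proof.
case: spE => s0 s1 s2.
rewrite /wv !sum3 /eps /= l0E n1E s0 s1 s2.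
have a2 := @anti2 R C HW.
by split; rewrite ?(a2 _ _ o4 o3) ?(a2 _ _ o2 o4) ?(a2 _ _ o3 o2); field.
Qed.

Lemma HmE i j : Hm C i j = C o2 (sp i) o2 (sp j) + C o3 (sp i) o3 (sp j) + C o4 (sp i) o4 (sp j).
Proof. by case: spE => s0 s1 s2; rewrite /Hm sum3 s0 s1 s2. Qed.

Lemma RiE i : Ri C i = Hm C i i.
Proof. by rewrite /Ri /Sm eqxx /=; ring. Qed.

Lemma RsE : Rs C = Ri C 0 + Ri C 1 + Ri C 2.
Proof.
rewrite !RiE /Rs sum3; congr (Hm C _ _ + Hm C _ _ + Hm C _ _); by apply: val_inj.
Qed.

Lemma RiE' : [/\ Ri C 0 = C o3 o2 o3 o2 + C o4 o2 o4 o2,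
                 Ri C 1 = C o2 o3 o2 o3 + C o4 o3 o4 o3
               & Ri C 2 = C o2 o4 o2 o4 + C o3 o4 o3 o4].
Proof.
case: spZ => s0 s1 s2.
rewrite !RiE !HmE s0 s1 s2.
have a1 := @anti1 R C HW.
have z2 := a1 o2 o2 o2 o2; have z3 := a1 o3 o3 o3 o3; have z4 := a1 o4 o4 o4 o4.
split; lra.
Qed.

Lemma HmOff : [/\ C o4 o2 o4 o3 = 0, C o3 o2 o3 o4 = 0 & C o2 o3 o2 o4 = 0].
Proof.
case: spE => s0 s1 s2.
have h01 := HS t0 t1 isT.
have h02 := HS t0 t2 isT.
have h12 := HS t1 t2 isT.
move: h01 h02 h12; rewrite /Sm /= !HmE s0 s1 s2 !mulr0 !subr0.
have a1 := @anti1 R C HW; have a2 := @anti2 R C HW.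
have := a1 o2 o2 o2 o3; have := a2 o3 o2 o3 o3;
have := a1 o2 o2 o2 o4; have := a2 o4 o2 o4 o4;
have := a1 o3 o3 o3 o4; have := a2 o4 o3 o4 o4.
move=> *; split; lra.
Qed.

Ltac s8 a b c d := let h := fresh in have h := @sym8 a b c d; destruct h as (?&?&?&?&?&?&?).

Ltac pool a b :=
  have := @trace5 R C HW a b;
  have := @bian R C HW o0 o1 a b; have := @bian R C HW o0 o1 b a;
  s8 o1 a o0 b; s8 o0 a b o1; s8 o0 b a o1; s8 o0 o1 a b;
  s8 o2 a o2 b; s8 o3 a o3 b; s8 o4 a o4 b; s8 a a a b; s8 b a b b.

Lemma Bm_eq : @Bm R C = Mmx C.
Proof.
case: spE => s0 s1 s2; case: wvE => w0 w1 w2; case: RiE' => r0 r1 r2.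
case: HmOff => h1 h2 h3.
apply/matrixP => i j. rewrite /Mmx /mx_of_seq !mxE.
case: (ord3_cases i) => ->; case: (ord3_cases j) => -> /=;
rewrite ?s0 ?s1 ?s2 ?w0 ?w1 ?w2 ?r0 ?r1 ?r2;
match goal with |- C o0 ?a o1 ?b = _ => pool a b end;
move=> *; lra.
Qed.

Lemma B0_eq : @B0 R C = (Omega C)^T.
Proof.
case: spE => s0 s1 s2; case: wvE => w0 w1 w2; case: RiE' => r0 r1 r2.
case: HmOff => h1 h2 h3.
have d0 := congr1 (fun M : 'M[R]_3 => M t0 t0) Bm_eq.
have d1 := congr1 (fun M : 'M[R]_3 => M t1 t1) Bm_eq.
have d2 := congr1 (fun M : 'M[R]_3 => M t2 t2) Bm_eq.
move: d0 d1 d2; rewrite /Mmx /mx_of_seq !mxE /= s0 s1 s2 r0 r1 r2 => d0 d1 d2.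
have := @trace5 R C HW o0 o1.
s8 o2 o0 o2 o1; s8 o3 o0 o3 o1; s8 o4 o0 o4 o1; s8 o0 o0 o1 o1.
s8 o3 o2 o3 o2; s8 o4 o2 o4 o2; s8 o4 o3 o4 o3.
move=> T.
apply/matrixP => k l. rewrite /Omega /mx_of_seq !mxE.
case: (ord4_cases k) => ->; case: (ord4_cases l) => -> /=;
rewrite /sw /pa /pb /= ?RsE ?s0 ?s1 ?s2 ?w0 ?w1 ?w2 ?r0 ?r1 ?r2;
match goal with |- C ?a ?b ?c ?d = _ => s8 a b c d end;
lra.
Qed.

Lemma Bp_eq : @Bp R C = (Mmx C)^T.
Proof.
rewrite -Bm_eq; apply/matrixP => i j; rewrite !mxE.
exact: (@pairS R C HW).
Qed.

End S3.

Lemma charM3 (R : realType) (a b c d e f g h k : R) :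
  char_poly (mx_of_seq 3 3 [:: [:: a; b; c]; [:: d; e; f]; [:: g; h; k]]) =
  'X^3 - (a + e + k)%:P * 'X^2
  + (a * e + a * k + e * k - b * d - c * g - f * h)%:P * 'X
  - (a * (e * k - f * h) - b * (d * k - f * g) + c * (d * h - e * g))%:P.
Proof.
rewrite /char_poly det3 /Af !mxE -!val_eqE /= !inordK //= ?mulr1n ?mulr0n.
ring.
Qed.

Definition m3 {R : comNzRingType} (a b c d e f g h k : R) :=
  a * (e * k - f * h) - b * (d * k - f * g) + c * (d * h - e * g).

Lemma charM4 (R : realType) (a b c d e f g h i j k l m n o p : R) :
  char_poly (mx_of_seq 4 4 [:: [:: a; b; c; d]; [:: e; f; g; h]; [:: i; j; k; l]; [:: m; n; o; p]]) =
  'X^4 - (a + f + k + p)%:P * 'X^3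
  + (a * f + a * k + a * p + f * k + f * p + k * p
     - b * e - c * i - d * m - g * j - h * n - l * o)%:P * 'X^2
  - (m3 f g h j k l n o p + m3 a c d i k l m o p + m3 a b d e f h m n p + m3 a b c e f g i j k)%:P * 'X
  + (a * m3 f g h j k l n o p - b * m3 e g h i k l m o p + c * m3 e f h i j l m n p
     - d * m3 e f g i j k m n o)%:P.
Proof.
rewrite /char_poly det4 /d3 /Af !mxE -!val_eqE /= !inordK //= ?mulr1n ?mulr0n /m3.
ring.
Qed.


Section Cub.
Local Open Scope complex_scope.



Lemma cub_help (K : comNzRingType) (x p0 p1 p2 : K) :
  x ^+ 3 = - p0 * 1 + - p1 * x + - p2 * x ^+ 2 -> x ^+ 3 + p2 * x ^+ 2 + p1 * x + p0 = 0.
Proof. by move=> ->; ring. Qed.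

Lemma cubic (R : realType) (a2 a1 a0 c : R) : a2 = 2 * c -> a1 = 3 * c ^+ 2 / 2 ->
  (c != 0) || (a0 != 0) ->
  let P := map_poly (real_complex R) ('X^3 + a2%:P * 'X^2 + a1%:P * 'X + a0%:P) in
  exists z : R[i], complex.Im z != 0 /\ root P z /\ root P (conjc z).
Proof.
move=> e2 e1 hc P.
have hev z : P.[z] = z ^+ 3 + a2%:C * z ^+ 2 + a1%:C * z + a0%:C.
  by rewrite /P !rmorphD !rmorphXn !rmorphM /= !map_polyX !map_polyC !hornerE.
have hconj z : root P z -> root P (conjc z).
  suff PE : map_poly conjc P = P by rewrite -complex_root_conj PE.
  rewrite /P -map_poly_comp; apply: eq_map_poly => y /=.
  by apply/eqP; rewrite eq_complex /= oppr0 !eqxx.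
suff [z [hz1 hz2]] : exists z : R[i], complex.Im z != 0 /\ P.[z] = 0.
  by exists z; split => //; split; [rewrite /root hz2 | apply: hconj; rewrite /root hz2].
have [x hx] := @solve_monicpoly R[i] 3%N
  (fun i => match i with 0 => - a0%:C | 1 => - a1%:C | _ => - a2%:C end)%N isT.
have hx' : P.[x] = 0.
  rewrite hev; apply: cub_help; move: hx; rewrite !big_ord_recr big_ord0 /= expr0 expr1 add0r.
  by [].
have [hIm|hIm] := eqVneq (complex.Im x) 0; last by exists x.
set u := complex.Re x.
have xE : x = u%:C.
  by rewrite [x]complexE hIm mulr0 addr0.
have hu : u ^+ 3 + a2 * u ^+ 2 + a1 * u + a0 = 0.
  apply: (@complexI R); move: hx'; rewrite hev xE => h.
  by rewrite raddf0 -h !rmorphD ?rmorphXn !rmorphM ?rmorphXn.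
set b := a2 + u.
set Q := a1 + a2 * u + u ^+ 2.
have sq_pos (y : R) : y != 0 -> 0 < y ^+ 2.
  by move=> h; rewrite lt0r sqr_ge0 andbT expf_neq0.
have hpos : 0 < Q - b ^+ 2 / 4.
  have -> : Q - b ^+ 2 / 4 = (c + u) ^+ 2 / 2 + u ^+ 2 / 4 by rewrite /Q /b e1 e2; field.
  have [u0|u0] := eqVneq u 0.
    have a00 : a0 = 0.
      move: hu; rewrite u0 e1 e2 !expr0n /=. lra.
    move: hc; rewrite a00 eqxx orbF u0 addr0 => hc.
    have : 0 < c ^+ 2 by apply: sq_pos.
    lra.
  have : 0 < u ^+ 2 by apply: sq_pos.
  have : 0 <= (c + u) ^+ 2 by rewrite sqr_ge0.
  lra.
set v := Num.sqrt (Q - b ^+ 2 / 4).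
have v2 : v ^+ 2 = Q - b ^+ 2 / 4 by rewrite sqr_sqrtr // ltW.
have vn0 : v != 0 by rewrite sqrtr_eq0 -ltNge.
exists (Complex (- b / 2) v); split => //.
set zz := Complex (- b / 2) v.
have zE : zz = (- b / 2)%:C + 'i%C * v%:C by rewrite [zz]complexE.
rewrite hev.
have -> : zz ^+ 3 + a2%:C * zz ^+ 2 + a1%:C * zz + a0%:C =
   (zz - u%:C) * ((zz + (b / 2)%:C) ^+ 2 + (Q - b ^+ 2 / 4)%:C)
   + (u ^+ 3 + a2 * u ^+ 2 + a1 * u + a0)%:C.
  by rewrite /Q /b; field.
have e : zz + (b / 2)%:C = 'i%C * v%:C by rewrite zE; ring.
by rewrite hu raddf0 addr0 e exprMn sqr_i -v2 rmorphXn mulN1r addNr mulr0.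
Qed.

End Cub.



Lemma coef4 (K : comNzRingType) (a b c d a' b' c' d' : K) :
  'X^4 - a%:P * 'X^3 + b%:P * 'X^2 - c%:P * 'X + d%:P =
  'X^4 - a'%:P * 'X^3 + b'%:P * 'X^2 - c'%:P * 'X + d'%:P -> a = a' /\ b = b'.
Proof.
move=> E; have h3 := congr1 (fun p : {poly K} => p`_3) E; have h2 := congr1 (fun p : {poly K} => p`_2) E.
move: h3 h2; rewrite /= !(coefD, coefB, coefN, coefCM, coefXn, coefX, coefC) /=.
rewrite !(mulr0, mulr1, addr0, add0r, oppr0).
by move=> /oppr_inj -> ->.
Qed.

Lemma cf43 (K : comNzRingType) (a b c d : K) :
  ('X^4 - a%:P * 'X^3 + b%:P * 'X^2 - c%:P * 'X + d%:P)`_3 = - a.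
Proof.
rewrite !(coefD, coefB, coefN, coefCM, coefXn, coefX, coefC) /=.
by rewrite !(mulr0, mulr1, addr0, add0r, oppr0, subr0).
Qed.
Lemma cf42 (K : comNzRingType) (a b c d : K) :
  ('X^4 - a%:P * 'X^3 + b%:P * 'X^2 - c%:P * 'X + d%:P)`_2 = b.
Proof.
rewrite !(coefD, coefB, coefN, coefCM, coefXn, coefX, coefC) /=.
by rewrite !(mulr0, mulr1, addr0, add0r, oppr0, subr0).
Qed.

Lemma cub_form (K : comNzRingType) (a b c : K) :
  'X^3 - a%:P * 'X^2 + b%:P * 'X - c%:P = 'X^3 + (- a)%:P * 'X^2 + b%:P * 'X + (- c)%:P.
Proof. rewrite !polyCN; ring. Qed.

Lemma trmxX (R : comNzRingType) n (A : 'M[R]_n.+1) k : (A^T) ^+ k = (A ^+ k)^T.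
Proof.
elim: k => [|k IH]; first by rewrite !expr0 trmx1.
by rewrite exprS IH exprSr -!mulmxE trmx_mul.
Qed.

Lemma CH3 (R : comNzRingType) (A : 'M[R]_3) : char_poly A = 'X^3 -> A ^+ 3 = 0.
Proof. by move=> e; have := Cayley_Hamilton A; rewrite e rmorphXn /= horner_mx_X. Qed.
Lemma CH4 (R : comNzRingType) (A : 'M[R]_4) : char_poly A = 'X^4 -> A ^+ 4 = 0.
Proof. by move=> e; have := Cayley_Hamilton A; rewrite e rmorphXn /= horner_mx_X. Qed.

Theorem mainTheorem6 (R : realType) (C : 'I_5 -> 'I_5 -> 'I_5 -> 'I_5 -> R) :
  is_weyl C ->
  (forall a b c d, (0 < bw a b c d)%R -> C a b c d = 0) ->
  (exists a b c d, bw a b c d = 0 /\ C a b c d <> 0) ->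
  (forall i j : 'I_3, i != j -> Sm C i j = 0) ->
  (exists lam : R[i],
      map_poly (real_complex R) (char_poly (Omega C)) = ('X - lam%:P) ^+ 4) ->
  weyl_op_nilpotent C \/
  (exists z : R[i], complex.Im z != 0 /\
     root (map_poly (real_complex R) (char_poly (Mmx C))) z /\
     root (map_poly (real_complex R) (char_poly (Mmx C))) (conjc z)).
Proof.
move=> HW H2 _ HS [lam Hlam].
have RsE' := @RsE R C.
set R0 := Ri C 0 in RsE' *; set R1 := Ri C 1 in RsE' *; set R2 := Ri C 2 in RsE' *.
set w3 := wv C 0; set w4 := wv C 1; set w5 := wv C 2.
set S := Rs C in RsE' *.
have EO : char_poly (Omega C) = _ := @charM4 R (S / 2) (- w3) (- w4) (- w5) w3 (S / 2 - R0) 0 0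
   w4 0 (S / 2 - R1) 0 w5 0 0 (S / 2 - R2).
have EM : char_poly (Mmx C) = _ := @charM3 R (- R0 / 2) (- w5 / 2) (w4 / 2) (w5 / 2) (- R1 / 2)
   (- w3 / 2) (- w4 / 2) (w3 / 2) (- R2 / 2).
have XL : ('X - lam%:P) ^+ 4 = 'X^4 - (4 * lam)%:P * 'X^3 + (6 * lam ^+ 2)%:P * 'X^2
   - (4 * lam ^+ 3)%:P * 'X + (lam ^+ 4)%:P by ring.
have h3 := congr1 (fun p : {poly R[i]} => p`_3) Hlam.
have h2 := congr1 (fun p : {poly R[i]} => p`_2) Hlam.
rewrite /= !coef_map /= EO XL in h3 h2.
rewrite !cf43 in h3; rewrite !cf42 in h2.
pose T := - R0 / 2 + - R1 / 2 + - R2 / 2.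
pose Sx := - R0 / 2 * (- R1 / 2) + - R0 / 2 * (- R2 / 2) + - R1 / 2 * (- R2 / 2)
  - - w5 / 2 * (w5 / 2) - w4 / 2 * (- w4 / 2) - - w3 / 2 * (w3 / 2).
pose D := - R0 / 2 * (- R1 / 2 * (- R2 / 2) - - w3 / 2 * (w3 / 2))
  - - w5 / 2 * (w5 / 2 * (- R2 / 2) - - w3 / 2 * (- w4 / 2))
  + w4 / 2 * (w5 / 2 * (w3 / 2) - - R1 / 2 * (- w4 / 2)).
have EM' : char_poly (Mmx C) = 'X^3 + (- T)%:P * 'X^2 + Sx%:P * 'X + (- D)%:P.
  by rewrite EM cub_form.
pose c2 := S / 2 * (S / 2 - R0) + S / 2 * (S / 2 - R1) + S / 2 * (S / 2 - R2) +
     (S / 2 - R0) * (S / 2 - R1) + (S / 2 - R0) * (S / 2 - R2) +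
     (S / 2 - R1) * (S / 2 - R2) - - w3 * w3 - - w4 * w4 -
     - w5 * w5 - 0 * 0 - 0 * 0 - 0 * 0.
have {}h2 : real_complex R c2 = 6 * lam ^+ 2 := h2.
have h3' : 4 * lam = real_complex R (S / 2 + (S / 2 - R0) + (S / 2 - R1) + (S / 2 - R2)).
  by apply: oppr_inj; rewrite -h3 rmorphN.
have lamE : lam = real_complex R (S / 4).
  apply: (@mulfI _ 4); first by rewrite pnatr_eq0.
  rewrite h3' -[4 in RHS](rmorph_nat (real_complex R)) -rmorphM; congr (real_complex R _).
  by rewrite RsE'; field.
have h2' : c2 = 6 * (S / 4) ^+ 2.
  apply: (@complexI R); rewrite h2 lamE -rmorphXn -(rmorph_nat (real_complex R)) -rmorphM //.
have key : Sx = c2 / 4 by rewrite /Sx /c2 RsE'; field.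
have eT : - T = 2 * (S / 4) by rewrite /T RsE'; field.
have eS : Sx = 3 * (S / 4) ^+ 2 / 2 by rewrite key h2'; field.
have [hn|hn] := boolP ((S / 4 != 0) || (- D != 0)).
  right; have := @cubic R (- T) Sx (- D) (S / 4) eT eS hn.
  by rewrite /= -EM'.
left.
move: hn; rewrite negb_or !negbK => /andP [/eqP c0 /eqP d0].
have chO : char_poly (Omega C) = 'X^4.
  apply: (map_poly_inj (real_complex R)); rewrite Hlam lamE c0 map_polyXn.
  by rewrite (rmorph0 (real_complex R)) polyC0 subr0.
have chM : char_poly (Mmx C) = 'X^3.
  rewrite EM' eT eS d0 c0 mulr0 expr0n /= mul0r mulr0 mul0r !polyC0 !mul0r !addr0.
  done.
apply: (@weyl_nilp R C HW H2).
- by rewrite (@Bm_eq R C HW HS) CH3.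
- by rewrite (@B0_eq R C HW HS) trmxX CH4 ?trmx0.
- by rewrite (@Bp_eq R C HW HS) trmxX CH3 ?trmx0.
Qed.
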